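(* Let $(X,d)$ be a metric space, $p\in X$, and define $\mu_p(x,y)=d(x,y)+\sqrt{d(x,p)d(y,p)}$ for $x,y\in X$. Let $x,y,z\in X$. If $$\max\{\mu_p(x,z),\mu_p(y,z)\}\geq K\min\{\mu_p(x,z),\mu_p(y,z)\}$$ for some $K>3$, then $$\mu_p(x,z)+\mu_p(y,z)\leq \frac{3(K+3)}{2(K-3)}\,d(x,y).$$ *)

(* Defs.v *)
From Stdlib Require Export Reals.
Open Scope R_scope.

Definition is_metric {X : Type} (d : X -> X -> R) : Prop :=
  (forall x y, 0 <= d x y) /\
  (forall x y, d x y = 0 <-> x = y) /\
  (forall x y, d x y = d y x) /\
  (forall x y z, d x z <= d x y + d y z).

Definition mu {X : Type} (d : X -> X -> R) (p x y : X) : R :=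
  d x y + sqrt (d x p * d y p).

(* Main.v *)
Require Import Defs.
From Stdlib Require Import Reals Lra Psatz.
Open Scope R_scope.

Lemma key_ineq (A B Cc T v u : R) (hA : 0 <= A) (hB : 0 <= B) (hC : 0 <= Cc) (hT : 0 <= T)
  (hv : 0 <= v) (h1 : A * A <= T * T + B * B) (h2 : Cc * Cc <= B * B + v)
  (h3 : u <= T * T + v) :
  u + A * Cc <= 3/2 * (T * T) + 3/2 * (v + B * Cc).
Proof.
  assert (hAB : A <= T + B) by nra.
  assert (hC2 : Cc * Cc <= B * Cc + v).
  { destruct (Rle_dec Cc B).
    - assert (0 <= Cc * (B - Cc)) by (apply Rmult_le_pos; lra). nra.
    - assert (0 <= B * (Cc - B)) by (apply Rmult_le_pos; lra). nra. }
  assert (A * Cc <= T * Cc + B * Cc) by (assert (0 <= (T + B - A) * Cc) by (apply Rmult_le_pos; lra); nra).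
  assert (T * Cc <= T * T / 2 + Cc * Cc / 2) by (assert (0 <= (T - Cc) * (T - Cc)) by apply Rle_0_sqr; nra).
  lra.
Qed.

Lemma key_mu (X : Type) (d : X -> X -> R) (hd : is_metric d) (p x y z : X) :
  mu d p x z <= 3/2 * d x y + 3/2 * mu d p y z.
Proof.
  destruct hd as [h0 [hid [hs ht]]].
  unfold mu.
  rewrite !sqrt_mult_alt by apply h0.
  pose proof (h0 x p). pose proof (h0 y p). pose proof (h0 z p). pose proof (h0 x y).
  pose proof (h0 y z).
  assert (E1 : forall r, 0 <= r -> sqrt r * sqrt r = r) by (intros; apply sqrt_sqrt; auto).
  replace (3/2 * d x y) with (3/2 * (sqrt (d x y) * sqrt (d x y))) by (rewrite E1; auto).
  apply key_ineq.
  all: try apply sqrt_pos; auto.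
  - rewrite !E1 by auto. pose proof (ht x y p). lra.
  - rewrite !E1 by auto. pose proof (ht z y p). rewrite (hs z y) in *. lra.
  - rewrite !E1 by auto. pose proof (ht x y z). lra.
Qed.

Lemma final (M m t K : R) (hK : 3 < K) (hm : 0 <= m) (hM : M <= 3/2 * t + 3/2 * m)
  (hMK : M >= K * m) : M + m <= 3 * (K + 3) / (2 * (K - 3)) * t.
Proof.
  assert (ht : 0 <= t) by nra.
  assert (h1 : (K - 3/2) * M <= 3/2 * K * t) by nra.
  assert (h2 : K * (M + m) <= (K + 1) * M) by nra.
  assert (h3 : 2 * (K - 3) * (M + m) <= 3 * (K + 3) * t).
  { assert (K * (2*K - 3) * (M + m) <= 3 * K * (K + 1) * t) by nra.
    assert ((2*K-3) * (M+m) <= 3 * (K+1) * t).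
    { apply (Rmult_le_reg_l K); nra. }
    nra. }
  apply (Rmult_le_reg_l (2 * (K - 3))); [lra|].
  replace (2 * (K - 3) * (3 * (K + 3) / (2 * (K - 3)) * t)) with (3 * (K + 3) * t)
    by (field; lra).
  lra.
Qed.

Theorem lemma3p2 (X : Type) (d : X -> X -> R) (hd : is_metric d)
  (p x y z : X) (K : R) (hK : 3 < K)
  (hmax : Rmax (mu d p x z) (mu d p y z) >= K * Rmin (mu d p x z) (mu d p y z)) :
  mu d p x z + mu d p y z <= 3 * (K + 3) / (2 * (K - 3)) * d x y.
Proof.
  assert (nn : forall a b, 0 <= mu d p a b).
  { intros a b. unfold mu. destruct hd as [h0 _].
    pose proof (h0 a b). pose proof (sqrt_pos (d a p * d b p)). lra. }
  unfold Rmax, Rmin in hmax.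
  destruct (Rle_dec (mu d p x z) (mu d p y z)).
  - rewrite Rplus_comm.
    rewrite (proj1 (proj2 (proj2 hd)) x y).
    apply final; auto. apply key_mu; auto.
  - apply final; auto. apply key_mu; auto.
Qed.
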